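(* Let $r\ge3$. For any partition $\mathcal{Q}$ of $[r]=\{1,\dots,r\}$ with $|\mathcal{Q}|\ge2$, there exists a bijection $\tau:\mathfrak{P}_{[r]}\to\mathfrak{P}_{[r]}$ such that $|\tau(\mathcal{P})|\equiv|\mathcal{P}|+1\pmod 2$ for every $\mathcal{P}\in\mathfrak{P}_{[r]}$, and $\widetilde\psi^{\mathcal{Q}}\circ\tau=\widetilde\psi^{\mathcal{Q}}$ for every $\psi:2^{[r]}\to\mathbb{R}$ with $\psi(\emptyset)=1$.
   Context: $\mathfrak{P}_{[r]}$ is the set of cyclically ordered partitions of $[r]$ (partitions into non-empty blocks with a cyclic order on the blocks; two such are equal if they have the same blocks and the same cyclic order), $|\mathcal{P}|$ the number of blocks. For a partition $\mathcal{Q}$ of $[r]$, $\psi^{\mathcal{Q}}(I)=\prod_{J\in\mathcal{Q}}\psi(I\cap J)$ and $\widetilde\psi^{\mathcal{Q}}(\mathcal{P})=\prod_{I\in\mathcal{P}}\psi^{\mathcal{Q}}(I)$. *)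

(* Defs.v *)
From HB Require Import structures.
From mathcomp Require Import all_boot all_order all_algebra all_fingroup.
From mathcomp Require Import Rstruct.
From Stdlib Require Import Reals.
Set Implicit Arguments. Unset Strict Implicit. Unset Printing Implicit Defensive.
Import GRing.Theory.
Local Open Scope ring_scope.

(* A cyclically ordered partition of [r] = 'I_r is a pair (P, s) where P is a
   partition of [r] into non-empty blocks and s is a permutation of the blocks
   that is a single cycle on P (every block reaches every other by iterating s)
   and fixes every set outside P.  Cyclic orders on a finite set P correspond
   bijectively to such cyclic permutations, so two such objects are equal iff
   they have the same blocks and the same cyclic order. *)
Definition is_coPart (r : nat) (Ps : {set {set 'I_r}} * {perm {set 'I_r}}) : bool :=
  [&& partition Ps.1 [set: 'I_r],
      [forall X, (X \notin Ps.1) ==> (Ps.2 X == X)] &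
      [forall X in Ps.1, forall Y in Ps.1, fconnect Ps.2 X Y]].

Definition coPart (r : nat) := {Ps : {set {set 'I_r}} * {perm {set 'I_r}} | is_coPart Ps}.

Definition blocks (r : nat) (P : coPart r) : {set {set 'I_r}} := (sval P).1.

Definition psiQ (r : nat) (psi : {set 'I_r} -> R) (Q : {set {set 'I_r}})
  (I : {set 'I_r}) : R := (\prod_(J in Q) psi (I :&: J)).

Definition tpsiQ (r : nat) (psi : {set 'I_r} -> R) (Q : {set {set 'I_r}})
  (P : coPart r) : R := (\prod_(I in blocks P) psiQ psi Q I).

(* Main.v *)
Require Import Defs.
From mathcomp Require Import all_boot all_order all_algebra all_fingroup.
From mathcomp Require Import Rstruct.
From Stdlib Require Import Reals.
Import GRing.Theory.
Set Implicit Arguments. Unset Strict Implicit. Unset Printing Implicit Defensive.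

Section Inv.
Variables (r : nat) (V : {set 'I_r}).

Definition t1 (B : {set 'I_r}) := B \subset V.
Definition t2 (B : {set 'I_r}) := B :&: V == set0.
Definition mixd B := ~~ t1 B && ~~ t2 B.

Fixpoint inv (L : seq {set 'I_r}) : seq {set 'I_r} :=
  match L with
  | [::] => [::]
  | B :: L' => if mixd B then (B :&: V) :: (B :\: V) :: L'
    else match L' with
         | [::] => [:: B]
         | C :: L'' => if t1 B && t2 C then (B :|: C) :: L'' else B :: inv L'
         end
  end.

Definition ne (B : {set 'I_r}) := B != set0.

Lemma t2U B C : ~~ t2 B -> ~~ t2 (B :|: C).
Proof.
rewrite /t2 => /set0Pn [x]; rewrite !inE => /andP[xB xV].
by apply/set0Pn; exists x; rewrite !inE xB xV.
Qed.

Lemma head_inv L : ~~ t2 (head set0 L) -> ~~ t2 (head set0 (inv L)).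
Proof.
case: L => [|B L] //= h.
case: ifP => [/andP[_ hm]|_].
  by move: hm; rewrite /t2 -setIA setIid.
case: L => [|C L] //=; case: ifP => _ //=; exact: t2U.
Qed.

Lemma inv_nil L : (inv L == [::]) = (L == [::]).
Proof. by case: L => [|B [|C L]] //=; do 2?case: ifP. Qed.

Lemma inv_cons2 B C L : mixd B = false ->
  inv [:: B, C & L] = if t1 B && t2 C then (B :|: C) :: L else B :: inv (C :: L).
Proof. by move=> hm; rewrite [LHS]/= hm. Qed.

Lemma inv_inv L : all ne L -> inv (inv L) = L.
Proof.
elim: L => [|B L IH] //= /andP[neB neL].
case: ifP => [hm|hm].
  rewrite /= /mixd /t1 subsetIr /= /t2.
  have -> : (B :\: V) :&: V == set0.
    by apply/eqP/setP => x; rewrite !inE; case: (x \in V); rewrite ?andbF.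
  by rewrite setID.
case: L IH neL => [|C L] IH neL //=; first by rewrite ?hm.
case: ifP => [/andP[h1 h2]|h12].
  move: neL => /= /andP[neC _].
  have hBC : (B :|: C) :&: V = B.
    rewrite setIUl (setIidPl h1) (eqP h2) setU0 //.
  have hBC2 : (B :|: C) :\: V = C.
    apply/setP => x; rewrite !inE; move: (subsetP h1 x).
    move/eqP/setP: h2 => /(_ x); rewrite !inE.
    by case: (x \in B); case: (x \in C); case: (x \in V) => //= _ H; have := H isT.
  have -> : mixd (B :|: C).
    rewrite /mixd /t1 /t2 hBC.
    apply/andP; split; last by [].
    apply/negP => /subsetP sub; case/set0Pn: neC => x xC.
    move/eqP/setP: h2 => /(_ x); rewrite !inE xC.
    by rewrite sub // !inE xC orbT.
  by rewrite hBC hBC2.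
change (inv (B :: inv (C :: L)) = B :: C :: L).
have hh : ~~ t1 B || ~~ t2 (head set0 (inv (C :: L))).
  case h1: (t1 B); last by rewrite /=.
  apply/orP; right; apply: head_inv; rewrite /=.
  by move: h12; rewrite h1 => /= ->.
have := IH neL; move: hh.
have : inv (C :: L) != [::] by rewrite inv_nil.
case: (inv (C :: L)) => [|C' L'] // _ hh eqL.
rewrite inv_cons2 // -eqL.
suff -> : (t1 B && t2 C') = false by [].
by case: (t1 B) hh => //= /negbTE.
Qed.

Lemma mixd_ne B : mixd B -> ne (B :&: V) && ne (B :\: V).
Proof.
rewrite /mixd /t1 /t2 /ne => /andP[h1 h2]; rewrite h2 /=.
apply: contra h1 => /eqP e; apply/subsetP => x xB.
by apply: contraT => xV; move/setP: e => /(_ x); rewrite !inE xV xB.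
Qed.

Lemma all_ne_inv L : all ne L -> all ne (inv L).
Proof.
elim: L => [|B L IH] //= /andP[neB neL].
case: ifP => hm.
  by move: (mixd_ne hm); rewrite /ne /= => /andP[-> ->].
case: L IH neL => [|C L] IH neL /=; first by rewrite neB.
case: ifP => _ /=; last by rewrite neB IH.
move: neL => /= /andP[_ ->]; rewrite andbT /ne.
apply: contra neB => /eqP e; apply/eqP/setP => x; move/setP: e => /(_ x).
by rewrite !inE; case: (x \in B).
Qed.

Definition cnt (x : 'I_r) (L : seq {set 'I_r}) := count (fun B : {set 'I_r} => x \in B) L.

Lemma cnt_inv L : (forall x, cnt x L <= 1) -> forall x, cnt x (inv L) = cnt x L.
Proof.
elim: L => [|B L IH] //= h x.
case: ifP => hm.
  by rewrite /= !inE; case: (x \in B); case: (x \in V).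
case: L IH h => [|C L] IH h //=.
case: ifP => _ /=.
  have := h x; rewrite /= inE.
  by case: (x \in B); case: (x \in C) => //=; rewrite ?add0n ?add1n.
rewrite -/(cnt x (inv (C :: L))) IH //.
move=> y; apply: leq_trans (h y); rewrite /cnt /=; exact: leq_addl.
Qed.

Lemma head_z z L : z \in V -> z \in head set0 L -> z \in head set0 (inv L).
Proof.
move=> zV; case: L => [|B L] //= zB.
case: ifP => _ /=; first by rewrite inE zB zV.
case: L => [|C L] //=; case: ifP => _ //=; by rewrite inE zB.
Qed.

Lemma size_inv L : ~~ t2 (head set0 L) -> has (fun B => ~~ t1 B) L ->
  size (inv L) = (size L).+1 \/ size L = (size (inv L)).+1.
Proof.
elim: L => [|B L IH] //= h2 hh.
case: ifP => hm; first by left.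
have h1 : t1 B by move: hm; rewrite /mixd (negbTE h2) andbT => /negbFE.
rewrite h1 /= in hh.
case: L IH hh => [|C L] IH hh //=.
case: ifP => h12; first by right.
rewrite h1 /= in h12.
have := IH; rewrite /= h12 => /(_ isT hh).
by case=> ->; [left|right].
Qed.

Local Open Scope ring_scope.
Lemma prod_inv (F : {set 'I_r} -> R) L :
  (forall X, F X = F (X :&: V) * F (X :\: V)) ->
  \prod_(I <- inv L) F I = \prod_(I <- L) F I.
Proof.
move=> hF; elim: L => [|B L IH]; first reflexivity.
case hm: (mixd B).
  by rewrite /= hm !big_cons mulrA -hF.
case: L IH => [|C L] IH; first by rewrite /= hm; reflexivity.
rewrite inv_cons2 //.
case: ifP => [/andP[h1 h2]|_]; last by rewrite [LHS]big_cons IH [RHS]big_cons.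
have hBC : (B :|: C) :&: V = B.
  by rewrite setIUl (setIidPl h1) (eqP h2) setU0.
have hBC2 : (B :|: C) :\: V = C.
  apply/setP => x; rewrite !inE; move: (subsetP h1 x).
  move/eqP/setP: h2 => /(_ x); rewrite !inE.
  by case: (x \in B); case: (x \in C); case: (x \in V) => //= _ H; have := H isT.
by rewrite !big_cons hF hBC hBC2 mulrA.
Qed.

Local Close Scope ring_scope.
End Inv.

Section CoP.
Variables (r : nat) (z : 'I_r).

Definition toL (Ps : {set {set 'I_r}} * {perm {set 'I_r}}) :=
  fingraph.orbit Ps.2 (pblock Ps.1 z).
Definition nxt (L : seq {set 'I_r}) : {perm {set 'I_r}} :=
  perm (can_inj (prev_next (undup_uniq L))).
Definition raw (L : seq {set 'I_r}) := ([set X in L], nxt L).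
Definition G (L : seq {set 'I_r}) :=
  [&& all (@ne r) L, [forall x, cnt x L == 1] & z \in head set0 L].

Lemma G_uniq L : all (@ne r) L -> (forall x, cnt x L <= 1) -> uniq L.
Proof.
elim: L => [|B L IH] //= /andP[neB neL] h; apply/andP; split.
  apply/negP => BL; case/set0Pn: neB => x xB.
  have := h x; rewrite /cnt /= xB.
  have : 0 < count (fun B : {set 'I_r} => x \in B) L.
    by rewrite -has_count; apply/hasP; exists B.
  by case: (count _ _).
apply: IH => // x; apply: leq_trans (h x); rewrite /cnt /=; exact: leq_addl.
Qed.

Lemma G_part L : all (@ne r) L -> (forall x, cnt x L == 1) ->
  partition [set X in L] [set: 'I_r].
Proof.
move=> neL h; apply/and3P; split.
- apply/eqP/setP => x; rewrite inE; apply/bigcupP.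
  have : has (fun B : {set 'I_r} => x \in B) L by rewrite has_count -/(cnt x L) (eqP (h x)).
  by case/hasP => B BL xB; exists B; rewrite ?inE.
- apply/trivIsetP => A B; rewrite !inE => AL BL nAB.
  rewrite -setI_eq0; apply/eqP/setP => x; rewrite !inE; apply/negP => /andP[xA xB].
  have : size (filter (fun B : {set 'I_r} => x \in B) L) = 1.
    by rewrite size_filter -/(cnt x L) (eqP (h x)).
  have hA : A \in filter (fun B : {set 'I_r} => x \in B) L by rewrite mem_filter xA AL.
  have hB : B \in filter (fun B : {set 'I_r} => x \in B) L by rewrite mem_filter xB BL.
  case: (filter _ L) hA hB => [|C [|]] // hA hB _.
  move: hA hB; rewrite !inE => /eqP eA /eqP eB.
  by rewrite eA eB eqxx in nAB.
- rewrite inE; apply/negP => h0; have := allP neL _ h0; by rewrite /ne eqxx.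
Qed.

Lemma nxtE L : uniq L -> nxt L =1 next L.
Proof. by move=> u X; rewrite permE undup_id. Qed.

Lemma nxt_cycle L : uniq L -> fcycle (nxt L) L.
Proof.
move=> u; rewrite (@eq_cycle _ _ (frel (next L))); first exact: cycle_next u.
by move=> a b; rewrite /= nxtE.
Qed.

Lemma G_facts L : G L -> [/\ all (@ne r) L, (forall x, cnt x L == 1) & uniq L].
Proof.
case/and3P => neL hc _.
have hc' : forall x, cnt x L == 1 by move=> x; exact: (forallP hc x).
split => //; apply: G_uniq => // x; by rewrite (eqP (hc' x)).
Qed.

Lemma G_coPart L : G L -> is_coPart (raw L).
Proof.
move=> hG; case: (G_facts hG) => neL hc u.
apply/and3P; split => /=.
- exact: G_part.
- apply/forallP => X; apply/implyP; rewrite inE => XL.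
  by rewrite nxtE // next_nth (negbTE XL).
- apply/forallP => X; apply/implyP; rewrite inE => XL.
  apply/forallP => Y; apply/implyP; rewrite inE => YL.
  by rewrite (fconnect_cycle (nxt_cycle u) XL) YL.
Qed.

Lemma toL_raw L : G L -> toL (raw L) = L.
Proof.
move=> hG; case: (G_facts hG) => neL hc u.
case/and3P: (G_part neL hc) => _ triv _.
case/and3P: hG => _ _; case: L neL hc u triv => [|B L'] neL hc u triv hz; first by rewrite inE in hz.
rewrite /toL /raw /=.
have -> : pblock [set X in B :: L'] z = B.
  by apply: def_pblock => //; rewrite inE mem_head.
by rewrite (fingraph.orbitE (nxt_cycle u) u (mem_head _ _)) /= eqxx rot0.
Qed.

Section OneP.
Variables (Ps : {set {set 'I_r}}) (s : {perm {set 'I_r}}) (hP : is_coPart (Ps, s)).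

Lemma hP3 : [/\ partition Ps [set: 'I_r],
   (forall X, X \notin Ps -> s X = X) &
   (forall X Y, X \in Ps -> Y \in Ps -> fconnect s X Y)].
Proof.
case/and3P: hP => /= part fx conn; split => //.
  by move=> X XP; apply/eqP; exact: (implyP (forallP fx X) XP).
move=> X Y XP YP; exact: (implyP (forallP (implyP (forallP conn X) XP) Y) YP).
Qed.

Lemma s_closed X : X \in Ps -> s X \in Ps.
Proof.
case: hP3 => _ fx _ XP; apply: contraT => nsX.
have := fx _ nsX => /perm_inj e; by rewrite e XP in nsX.
Qed.

Lemma A0P : pblock Ps z \in Ps.
Proof.
case: hP3 => /and3P[/eqP cov _ _] _ _; by apply: pblock_mem; rewrite cov inE.
Qed.

Lemma memL Y : (Y \in toL (Ps, s)) = (Y \in Ps).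
Proof.
rewrite /toL /= -fconnect_orbit; apply/idP/idP.
  rewrite fconnect_orbit /fingraph.orbit => /trajectP [i _ ->].
  elim: i => [|i IHi] /=; [exact: A0P | exact: s_closed].
case: hP3 => _ _ conn YP; exact: conn A0P YP.
Qed.

Lemma G_toL : G (toL (Ps, s)).
Proof.
case: hP3 => /and3P[/eqP cov triv n0] fx _.
apply/and3P; split.
- apply/allP => Y; rewrite memL => YP; rewrite /ne.
  by apply: contraTneq YP => ->.
- apply/forallP => x; apply/eqP.
  rewrite /cnt (@eq_in_count _ _ (pred1 (pblock Ps x))).
    by rewrite count_uniq_mem ?orbit_uniq // memL pblock_mem // cov inE.
  move=> Y; rewrite memL => YP /=; apply/idP/eqP => [xY|->].
    by rewrite (def_pblock triv YP xY).
  by rewrite mem_pblock cov inE.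
- by rewrite /toL /fingraph.orbit -orderSpred /= mem_pblock cov inE.
Qed.

Lemma raw_toL : raw (toL (Ps, s)) = (Ps, s).
Proof.
case: hP3 => _ fx _.
rewrite /raw; congr (_, _).
  by apply/setP => Y; rewrite inE memL.
apply/permP => Y; rewrite nxtE ?orbit_uniq //.
case YL: (Y \in toL (Ps, s)).
  by rewrite (nextE (cycle_orbit (@perm_inj _ s) _) YL).
rewrite next_nth YL fx //; by rewrite -memL YL.
Qed.
End OneP.
End CoP.

Section PS.
Local Open Scope ring_scope.
Lemma prod_set (r : nat) (F : {set 'I_r} -> R) (L : seq {set 'I_r}) : uniq L ->
  \prod_(I in [set X in L]) F I = \prod_(I <- L) F I.
Proof. by move=> u; rewrite big_uniq //; apply: eq_bigl => X; rewrite inE. Qed.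
End PS.

Theorem lemma8p2 (r : nat) (Q : {set {set 'I_r}}) :
  3 <= r -> partition Q [set: 'I_r] -> 2 <= #|Q| ->
  exists tau : coPart r -> coPart r,
    [/\ bijective tau,
        (forall P : coPart r, #|blocks (tau P)| = (#|blocks P|).+1 %[mod 2]) &
        (forall psi : {set 'I_r} -> R, psi set0 = 1%R ->
           forall P : coPart r, tpsiQ psi Q (tau P) = tpsiQ psi Q P)].
Proof.
move=> r3 partQ Q2.
have r0 : 0 < r by apply: leq_trans r3.
pose z : 'I_r := Ordinal r0.
case/and3P: partQ => /eqP covQ trivQ n0Q.
pose V := pblock Q z.
have VQ : V \in Q by apply: pblock_mem; rewrite covQ inE.
have zV : z \in V by rewrite mem_pblock covQ inE.
have [y yV] : exists y, y \notin V.
  have : 0 < #|Q :\ V|.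
    by move: Q2; rewrite (cardsD1 V Q) VQ add1n ltnS.
  rewrite card_gt0 => /set0Pn [J]; rewrite !inE => /andP[nJV JQ].
  have : J != set0 by apply: contraTneq JQ => ->.
  case/set0Pn => y yJ; exists y; apply/negP => yv.
  by rewrite -(def_pblock trivQ JQ yJ) (def_pblock trivQ VQ yv) eqxx in nJV.
pose tau (P : coPart r) : coPart r := insubd P (raw (inv V (toL z (sval P)))).
have GL : forall P : coPart r, G z (toL z (sval P)).
  by case=> [[Ps s] hP]; exact: G_toL.
have GiL : forall P : coPart r, G z (inv V (toL z (sval P))).
  move=> P; case: (G_facts (GL P)) => neL hc u.
  case/and3P: (GL P) => _ _ hz.
  apply/and3P; split.
  - exact: all_ne_inv.
  - apply/forallP => x; rewrite cnt_inv //.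
    by move=> x'; rewrite (eqP (hc x')).
  - exact: head_z.
have key : forall P, sval (tau P) = raw (inv V (toL z (sval P))).
  by move=> P; rewrite /tau insubdK //; apply: G_coPart.
have key2 : forall P, toL z (sval (tau P)) = inv V (toL z (sval P)).
  by move=> P; rewrite key toL_raw.
have bl : forall P : coPart r, blocks P = [set X in toL z (sval P)].
  case=> [[Ps s] hP]; rewrite /blocks /=; apply/setP => Y; by rewrite inE (memL z hP).
have ttK : cancel tau tau.
  move=> P; apply: val_inj; rewrite /= key key2 inv_inv.
    by case: P => [[Ps s] hP]; rewrite /= (raw_toL z hP).
  by case: (G_facts (GL P)).
exists tau; split.
- by exists tau.
- move=> P; rewrite !bl key2.
  case: (G_facts (GiL P)) => _ _ ui; case: (G_facts (GL P)) => neL hc u.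
  rewrite !cardsE (card_uniqP ui) (card_uniqP u).
  have h2 : ~~ t2 V (head set0 (toL z (sval P))).
    case/and3P: (GL P) => _ _ hz; rewrite /t2; apply/set0Pn; exists z.
    by rewrite inE hz zV.
  have hh : has (fun B => ~~ t1 V B) (toL z (sval P)).
    have : has (fun B : {set 'I_r} => y \in B) (toL z (sval P)).
      by rewrite has_count -/(cnt y _) (eqP (hc y)).
    case/hasP => B BL yB; apply/hasP; exists B => //.
    by rewrite /t1; apply/negP => /subsetP /(_ y yB); apply/negP.
  case: (size_inv h2 hh) => ->; first by [].
  by rewrite -(addn2 (size _)) modnDr.
- move=> psi hpsi P.
  have h1 : psi set0 = GRing.one R by rewrite hpsi.
  have hF : forall X, psiQ psi Q X = GRing.mul (psiQ psi Q (X :&: V)) (psiQ psi Q (X :\: V)).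
    move=> X; rewrite /psiQ -big_split; apply: eq_bigr => J JQ /=.
    case: (J =P V) => [->|nJV].
      have -> : (X :\: V) :&: V = set0.
        by apply/setP => x; rewrite !inE; case: (x \in V); rewrite ?andbF.
      by rewrite h1 mulr1 -setIA setIid.
    have dJV := trivIsetP trivQ J V JQ VQ (introN eqP nJV).
    have -> : X :&: V :&: J = set0.
      apply/setP => x; rewrite !inE; case xJ: (x \in J); rewrite ?andbF ?andbT //.
      case xV: (x \in V); rewrite ?andbF ?andbT //.
      by move: dJV; rewrite -setI_eq0 => /eqP/setP/(_ x); rewrite !inE xV xJ.
    have -> : (X :\: V) :&: J = X :&: J.
      apply/setP => x; rewrite !inE; case xJ: (x \in J); rewrite ?andbF ?andbT //.
      case xV: (x \in V) => //=.
      by move: dJV; rewrite -setI_eq0 => /eqP/setP/(_ x); rewrite !inE xV xJ.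
    by rewrite h1 mul1r.
  rewrite /tpsiQ !bl key2.
  case: (G_facts (GiL P)) => _ _ ui; case: (G_facts (GL P)) => _ _ u.
  by rewrite !prod_set // prod_inv.
Qed.
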